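(* Let $(q_l)_{l\ge1}$ be positive numbers with $q_1=1$ and $0<R:=\lim_{l\to\infty}q_l/q_{l+1}<\infty$, and assume (EQ): $\tilde f(1)>1$, or $\tilde f(1)=1$ and $\tilde g(1)<\infty$. Let $\rho^*>0$. Then the infimum $$\tilde A_{\min}=\inf\{\tilde A(z):\ z\in X_{0+},\ \rho(z)=\rho^*\}$$ is attained, and a minimizer is $z^*_l=N^*\tilde q_l(\mu^* )^l$, $l\in\mathbb{N}$, where $\mu^*\in(0,1]$ is the unique solution of $\tilde f(\mu^* )=1$ and $N^*=\rho^*/\tilde g(\mu^* )$.
   Context: $X=\{z=(z_l)_{l\ge1}:\sum_l l|z_l|<\infty\}$, $X_{0+}$ its nonnegative elements, $\rho(z)=\sum_l lz_l$, $N(z)=\sum_l z_l$. Set $\tilde q_l=q_lR^l$, $\tilde f(\mu)=\sum_{l\ge1}\tilde q_l\mu^l$, $\tilde g(\mu)=\sum_{l\ge1}l\tilde q_l\mu^l$, $\tilde f(1)=\sum_l\tilde q_l\in(0,\infty]$, $\tilde g(1)=\sum_l l\tilde q_l\in(0,\infty]$. For $z\in X_{0+}\setminus\{0\}$, $\tilde A(z)=\sum_l z_l\ln\big(z_l/(\tilde q_lN(z))\big)$ with $0\ln0=0$, and $\tilde A(0)=0$. *)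

(* Defs.v *)
From HB Require Import structures.
From mathcomp Require Import all_boot all_order all_algebra.
From mathcomp Require Import all_classical all_reals all_analysis.
Set Implicit Arguments. Unset Strict Implicit. Unset Printing Implicit Defensive.
Import Order.TTheory GRing.Theory Num.Theory.
Import numFieldNormedType.Exports.
Local Open Scope classical_set_scope.
Local Open Scope ring_scope.

(* Sequences (z_l)_{l>=1} are represented as functions nat -> R; the value
   at index 0 is ignored by every definition below (all sums start at l = 1). *)

Section Defs.
Variable R : realType.

Definition qtilde (q : nat -> R) (Rr : R) (l : nat) : R := q l * Rr ^+ l.

Definition ftilde (q : nat -> R) (Rr : R) (mu : R) : \bar R :=
  (\sum_(1 <= l <oo) (qtilde q Rr l * mu ^+ l)%:E)%E.

Definition gtilde (q : nat -> R) (Rr : R) (mu : R) : \bar R :=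
  (\sum_(1 <= l <oo) (l%:R * qtilde q Rr l * mu ^+ l)%:E)%E.

Definition rho (z : nat -> R) : \bar R :=
  (\sum_(1 <= l <oo) (l%:R * z l)%:E)%E.

Definition Ntot (z : nat -> R) : \bar R :=
  (\sum_(1 <= l <oo) (z l)%:E)%E.

Definition X0plus (z : nat -> R) : Prop :=
  (forall l, (1 <= l)%N -> 0 <= z l) /\ (rho z < +oo)%E.

Definition Aterm (q : nat -> R) (Rr : R) (N : R) (z : nat -> R) (l : nat) : R :=
  if z l == 0 then 0 else z l * ln (z l / (qtilde q Rr l * N)).

Definition Atilde (q : nat -> R) (Rr : R) (z : nat -> R) : R :=
  if `[< forall l, (1 <= l)%N -> z l = 0 >] then 0
  else limn (fun n => \sum_(1 <= l < n) Aterm q Rr (fine (Ntot z)) z l).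

End Defs.

(* Main.v *)
Require Import Defs.
From HB Require Import structures.
From mathcomp Require Import all_boot all_order all_algebra.
From mathcomp Require Import all_classical all_reals all_analysis.
From mathcomp Require Import ring lra.
Import Order.TTheory GRing.Theory Num.Theory.
Import numFieldNormedType.Exports.
Local Open Scope classical_set_scope.
Local Open Scope ring_scope.
Section Ser.
Context {R : realType}.
Implicit Types (u v : nat -> R).

Lemma ser_cvg u (s : R) : (forall l, (1 <= l)%N -> 0 <= u l) ->
  (\sum_(1 <= l <oo) (u l)%:E)%E = s%:E ->
  (fun n => \sum_(1 <= l < n) u l) @ \oo --> s.
Proof.
move=> u0 us.
have h : (fun n => (\sum_(1 <= l < n) (u l)%:E)%E) @ \oo --> s%:E.
  rewrite -us; apply: is_cvg_nneseries => n n1 _; rewrite lee_fin; exact: u0.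
have /fine_cvgP[_ h2] := h.
apply: cvg_trans h2; apply: near_eq_cvg; near=> n => /=.
by rewrite sumEFin.
Unshelve. all: end_near.
Qed.

Lemma ser_ge_partial u n : (forall l, (1 <= l)%N -> 0 <= u l) ->
  ((\sum_(1 <= l < n) u l)%:E <= \sum_(1 <= l <oo) (u l)%:E)%E.
Proof.
move=> u0; rewrite -sumEFin.
by apply: (@nneseries_lim_ge R (fun l => (u l)%:E) xpredT) => k k1 _; rewrite lee_fin u0.
Qed.

Lemma ser_ge0 u : (forall l, (1 <= l)%N -> 0 <= u l) ->
  (0 <= \sum_(1 <= l <oo) (u l)%:E)%E.
Proof.
move=> u0; have := @ser_ge_partial u 0 u0.
by rewrite big_geq.
Qed.

Lemma ser_le u v : (forall l, (1 <= l)%N -> 0 <= u l <= v l) ->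
  (\sum_(1 <= l <oo) (u l)%:E <= \sum_(1 <= l <oo) (v l)%:E)%E.
Proof.
move=> uv; rewrite (eseries_cond (fun l => (u l)%:E)) (eseries_cond (fun l => (v l)%:E)).
apply: lee_nneseries => i; first by move=> _ /andP[_ /uv/andP[h _]]; rewrite lee_fin.
by move=> /andP[_ /uv/andP[_ h]]; rewrite lee_fin.
Qed.

Lemma ser_bound u (B : R) : (forall l, (1 <= l)%N -> 0 <= u l) ->
  (forall n, \sum_(1 <= l < n) u l <= B) ->
  (\sum_(1 <= l <oo) (u l)%:E <= B%:E)%E.
Proof.
move=> u0 uB; apply: lime_le.
  by apply: is_cvg_nneseries => n n1 _; rewrite lee_fin u0.
by apply: nearW => n; rewrite sumEFin lee_fin.
Qed.

Lemma ser_scale u (c : R) : 0 <= c -> (forall l, (1 <= l)%N -> 0 <= u l) ->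
  (\sum_(1 <= l <oo) (c * u l)%:E = c%:E * \sum_(1 <= l <oo) (u l)%:E)%E.
Proof.
move=> c0 u0; rewrite (eseries_cond (fun l => (c * u l)%:E)) (eseries_cond (fun l => (u l)%:E)).
under eq_eseriesr do rewrite EFinM.
by apply: nneseriesZl => i /andP[_ h]; rewrite lee_fin u0.
Qed.

Lemma ser_add u v : (forall l, (1 <= l)%N -> 0 <= u l) ->
  (forall l, (1 <= l)%N -> 0 <= v l) ->
  (\sum_(1 <= l <oo) (u l + v l)%:E = \sum_(1 <= l <oo) (u l)%:E + \sum_(1 <= l <oo) (v l)%:E)%E.
Proof.
move=> u0 v0.
under eq_eseriesr do rewrite EFinD.
by apply: nneseriesD => i i1 _; rewrite lee_fin ?u0 ?v0.
Qed.

Lemma ser0 u : (forall l, (1 <= l)%N -> u l = 0) ->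
  (\sum_(1 <= l <oo) (u l)%:E = 0)%E.
Proof. by move=> u0; apply: eseries0 => i i1 _; rewrite u0. Qed.

End Ser.

Section Real.
Context {R : realType}.

Lemma term_le_sum (u : nat -> R) a b l : (forall k, (a <= k < b)%N -> 0 <= u k) ->
  (a <= l < b)%N -> u l <= \sum_(a <= k < b) u k.
Proof.
move=> u0 /andP[al lb].
rewrite (big_cat_nat al (ltnW lb)) /= (big_ltn lb).
have h1 : 0 <= \sum_(a <= k < l) u k.
  rewrite big_nat_cond; apply: sumr_ge0 => i /andP[/andP[ai il] _].
  by apply: u0; rewrite ai (ltn_trans il lb).
have h2 : 0 <= \sum_(l.+1 <= k < b) u k.
  rewrite big_nat_cond; apply: sumr_ge0 => i /andP[/andP[ai il] _].
  by apply: u0; rewrite il andbT (leq_trans al) // ltnW.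
lra.
Qed.

Lemma sum_ge0_nat (u : nat -> R) a b : (forall k, (a <= k)%N -> 0 <= u k) ->
  0 <= \sum_(a <= k < b) u k.
Proof.
move=> u0; rewrite big_nat_cond; apply: sumr_ge0 => i /andP[/andP[ai _] _].
exact: u0.
Qed.

Lemma geo_le (x : R) n : 0 <= x < 1 -> \sum_(1 <= l < n) x ^+ l <= (1 - x)^-1.
Proof.
move=> /andP[x0 x1].
have x1p : 0 < 1 - x by lra.
case: n => [|n]; first by rewrite big_geq // invr_ge0 ltW.
have e : (\sum_(1 <= l < n.+1) x ^+ l) * (1 - x) = x - x ^+ n.+1.
  elim: n => [|n ih]; first by rewrite big_geq // mul0r expr1 subrr.
  rewrite (@big_nat_recr _ _ _ n.+1) //=. rewrite mulrDl ih [x ^+ n.+2]exprS; lra.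
rewrite -(ler_pM2r x1p) e mulVf ?gt_eqF //.
have : 0 <= x ^+ n.+1 by rewrite exprn_ge0.
lra.
Qed.

Lemma geo_fin (C x : R) : 0 <= C -> 0 <= x < 1 ->
  (\sum_(1 <= l <oo) (C * x ^+ l)%:E < +oo)%E.
Proof.
move=> C0 /andP[x0 x1].
apply: (@le_lt_trans _ _ (C * (1 - x)^-1)%:E); last exact: ltey.
apply: ser_bound => [l _|n]; first by rewrite mulr_ge0 // exprn_ge0.
rewrite -mulr_sumr ler_wpM2l //; apply: geo_le; lra.
Qed.

Lemma growth (s : nat -> R) (r : R) : (forall l, (1 <= l)%N -> 0 < s l) -> 1 <= r ->
  (\forall l \near \oo, s l.+1 <= r * s l) ->
  exists C, 0 < C /\ forall l, (1 <= l)%N -> s l <= C * r ^+ l.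
Proof.
move=> s0 r1 [N _ HN].
pose M := N.+1.
pose C := 1 + \sum_(1 <= k < M.+1) s k.
have S0 : 0 <= \sum_(1 <= k < M.+1) s k by apply: sum_ge0_nat => k k1; exact/ltW/s0.
have C0 : 0 < C by rewrite /C; lra.
exists C; split => // l l1.
have small : forall l, (1 <= l <= M)%N -> s l <= C * r ^+ l.
  move=> k /andP[k1 kM].
  have h1 : s k <= \sum_(1 <= k < M.+1) s k.
    by apply: term_le_sum => [j /andP[j1 _]|]; [exact/ltW/s0|rewrite k1 ltnS].
  have h2 : 1 <= r ^+ k by apply: exprn_ege1.
  have : C <= C * r ^+ k by rewrite ler_peMr // ltW.
  rewrite /C in C0 *; lra.
have big : forall k, s (M + k)%N <= C * r ^+ (M + k).
  elim=> [|k ih]; first by rewrite addn0; apply: small; rewrite /M leqnn.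
  rewrite addnS.
  have h : s (M + k).+1 <= r * s (M + k)%N by apply: HN; rewrite /M /= (leq_trans (leqnSn N)) // leq_addr.
  apply: (le_trans h); rewrite exprS mulrCA ler_wpM2l //; lra.
case: (leqP l M) => lM; first by apply: small; rewrite l1 lM.
by rewrite -(subnKC (ltnW lM)); apply: big.
Qed.

End Real.

Section Prob.
Context {R : realType} (q : nat -> R) (Rr : R).
Hypothesis qpos : forall l, (1 <= l)%N -> 0 < q l.
Hypothesis Rpos : 0 < Rr.
Hypothesis Rlim : (fun l => q l / q l.+1) @ \oo --> Rr.
Local Notation qt := (qtilde q Rr).

Lemma qt_pos l : (1 <= l)%N -> 0 < qt l.
Proof. by move=> l1; rewrite /qtilde mulr_gt0 ?exprn_gt0 ?qpos. Qed.

Lemma ratio_up r : 1 < r -> \forall l \near \oo, qt l.+1 <= r * qt l.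
Proof.
move=> r1.
have r0 : 0 < r by lra.
have hz : Rr / r < Rr by rewrite ltr_pdivrMr // ltr_pMr.
have h : \forall t \near \oo, Rr / r < q t / q t.+1 := cvgr_gt _ Rlim _ hz.
near=> l.
have l1 : (0 < l)%N by near: l; exact: nbhs_infty_gt.
have hl : Rr / r < q l / q l.+1 by near: l; exact: h.
have ql := qpos _ l1.
have ql1 : 0 < q l.+1 by apply: qpos.
set t := q l / q l.+1 in hl.
have e : q l = t * q l.+1 by rewrite /t divfK // gt_eqF.
rewrite ltr_pdivrMr // in hl.
have hP : 0 < q l.+1 * Rr ^+ l by rewrite mulr_gt0 // exprn_gt0.
rewrite /qtilde e exprS.
have -> : q l.+1 * (Rr * Rr ^+ l) = Rr * (q l.+1 * Rr ^+ l) by ring.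
have -> : r * (t * q l.+1 * Rr ^+ l) = (t * r) * (q l.+1 * Rr ^+ l) by ring.
by rewrite ler_pM2r // ltW.
Unshelve. all: end_near.
Qed.

Lemma ratio_down : \forall l \near \oo, qt l <= 2 * qt l.+1.
Proof.
have hz : Rr < 2 * Rr by rewrite mulr_natl mulr2n ltrDr.
have h : \forall t \near \oo, q t / q t.+1 < 2 * Rr := cvgr_lt _ Rlim _ hz.
near=> l.
have l1 : (0 < l)%N by near: l; exact: nbhs_infty_gt.
have hl : q l / q l.+1 < 2 * Rr by near: l; exact: h.
have ql := qpos _ l1.
have ql1 : 0 < q l.+1 by apply: qpos.
set t := q l / q l.+1 in hl.
have e : q l = t * q l.+1 by rewrite /t divfK // gt_eqF.
have hP : 0 < q l.+1 * Rr ^+ l by rewrite mulr_gt0 // exprn_gt0.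
rewrite /qtilde e exprS.
have -> : t * q l.+1 * Rr ^+ l = t * (q l.+1 * Rr ^+ l) by ring.
have -> : 2 * (q l.+1 * (Rr * Rr ^+ l)) = (2 * Rr) * (q l.+1 * Rr ^+ l) by ring.
by rewrite ler_pM2r // ltW.
Unshelve. all: end_near.
Qed.

Lemma qt_upper r : 1 < r -> exists C, 0 < C /\ forall l, (1 <= l)%N -> qt l <= C * r ^+ l.
Proof.
move=> r1; apply: growth => //; [exact: qt_pos | lra | exact: ratio_up].
Qed.

Lemma qt_lower : exists c, 0 < c /\ forall l, (1 <= l)%N -> c / 2 ^+ l <= qt l.
Proof.
have [C [C0 HC]] : exists C, 0 < C /\ forall l, (1 <= l)%N -> (qt l)^-1 <= C * 2 ^+ l.
  apply: (@growth R (fun l => (qt l)^-1)); [by move=> l l1; rewrite invr_gt0 qt_pos | by rewrite ler1n |].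
  near=> l.
  have l1 : (0 < l)%N by near: l; exact: nbhs_infty_gt.
  have h : qt l <= 2 * qt l.+1 by near: l; exact: ratio_down.
  have q0 := qt_pos _ l1.
  have q1 : 0 < qt l.+1 by apply: qt_pos.
  have e : 2 * (qt l)^-1 = (qt l / 2)^-1 by rewrite invf_div mulrC.
  rewrite e lef_pV2 ?posrE //; [lra | exact: divr_gt0].
exists C^-1; split; first by rewrite invr_gt0.
move=> l l1; have := HC l l1.
have q0 := qt_pos _ l1.
have p0 : 0 < C * 2 ^+ l by rewrite mulr_gt0 // exprn_gt0.
rewrite -lef_pV2 ?posrE ?invr_gt0 // invrK invfM.
by rewrite mulrC.
Unshelve. all: end_near.
Qed.

Lemma nat_growth r : 1 < r -> exists C, 0 < C /\ forall l, (1 <= l)%N -> (l%:R : R) <= C * r ^+ l.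
Proof.
move=> r1; apply: growth => //; [by move=> l l1; rewrite ltr0n | lra |].
have d0 : 0 < r - 1 by lra.
near=> l.
have h : (r - 1)^-1 <= l%:R by near: l; exact: nbhs_infty_ger.
have h2 : 1 <= (r - 1) * l%:R by rewrite -ler_pdivrMl // mulr1.
rewrite -addn1 natrD; lra.
Unshelve. all: end_near.
Qed.

Lemma f_fin (mu : R) : 0 <= mu < 1 -> (ftilde q Rr mu < +oo)%E.
Proof.
move=> /andP[m0 m1].
pose r := 1 + (1 - mu) / 3.
have r1 : 1 < r by rewrite /r; lra.
have rm : r * mu < 1 by rewrite /r; nra.
have [C [C0 HC]] := qt_upper _ r1.
apply: (le_lt_trans _ (@geo_fin R C (r * mu) (ltW C0) _)); last first.
  by rewrite rm andbT mulr_ge0 //; lra.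
apply: ser_le => l l1; rewrite mulr_ge0 ?exprn_ge0 ?(ltW (qt_pos _ l1)) //=.
rewrite exprMn mulrA ler_wpM2r ?exprn_ge0 //; exact: HC.
Qed.

Lemma g_fin (mu : R) : 0 <= mu < 1 -> (gtilde q Rr mu < +oo)%E.
Proof.
move=> /andP[m0 m1].
pose r := 1 + (1 - mu) / 3.
have r1 : 1 < r by rewrite /r; lra.
have rm : r * r * mu < 1.
  rewrite /r; set d := (1 - mu) / 3.
  have -> : mu = 1 - 3 * d by rewrite /d; field.
  have : 0 < d by rewrite /d; lra.
  nra.
have [C [C0 HC]] := qt_upper _ r1.
have [C' [C'0 HC']] := nat_growth _ r1.
apply: (le_lt_trans _ (@geo_fin R (C' * C) (r * r * mu) _ _)); last first.
- by rewrite rm andbT !mulr_ge0 //; lra.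
- by rewrite mulr_ge0 // ltW.
apply: ser_le => l l1; rewrite !mulr_ge0 ?exprn_ge0 ?(ltW (qt_pos _ l1)) //=.
rewrite !exprMn.
have a1 := HC l l1; have a2 := HC' l l1.
have p1 : 0 <= mu ^+ l by rewrite exprn_ge0.
have p2 : 0 <= qt l by exact: ltW (qt_pos _ l1).
have p3 : 0 <= l%:R :> R by [].
have -> : C' * C * (r ^+ l * r ^+ l * mu ^+ l) = (C' * r ^+ l) * (C * r ^+ l) * mu ^+ l by ring.
rewrite ler_wpM2r //.
by apply: ler_pM.
all: try exact: ltW (qpos _ l1); exact: ltW Rpos.
Qed.

End Prob.

Section P4.
Context {R : realType} (q : nat -> R) (Rr : R).
Hypothesis qpos : forall l, (1 <= l)%N -> 0 < q l.
Hypothesis Rpos : 0 < Rr.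
Hypothesis Rlim : (fun l => q l / q l.+1) @ \oo --> Rr.
Local Notation qt := (qtilde q Rr).

Lemma pow_lip (x y b : R) l : 0 <= x -> x <= y -> y <= b -> 0 < b ->
  b * (y ^+ l - x ^+ l) <= (y - x) * l%:R * b ^+ l.
Proof.
move=> x0 xy yb b0.
elim: l => [|l ih]; first by rewrite !expr0 subrr mulr0 mulr0 mul0r.
have A0 : x ^+ l <= y ^+ l by rewrite lerXn2r // ?nnegrE //; lra.
have A1 : y ^+ l <= b ^+ l by rewrite lerXn2r // ?nnegrE //; lra.
have B0 : 0 <= x ^+ l by rewrite exprn_ge0.
have h1 : y * (b * (y ^+ l - x ^+ l)) <= y * ((y - x) * l%:R * b ^+ l).
  by rewrite ler_wpM2l //; lra.
have h2 : y * ((y - x) * l%:R * b ^+ l) <= b * ((y - x) * l%:R * b ^+ l).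
  have K0 : 0 <= (y - x) * l%:R * b ^+ l.
    by rewrite !mulr_ge0 ?exprn_ge0 ?subr_ge0 // ltW.
  by rewrite ler_wpM2r.
have h3 : b * x ^+ l * (y - x) <= b * b ^+ l * (y - x).
  have yx : 0 <= y - x by lra.
  by rewrite ler_wpM2r // ler_wpM2l ?(ltW b0) // (le_trans A0 A1).
have e : b * (y ^+ l.+1 - x ^+ l.+1) = y * (b * (y ^+ l - x ^+ l)) + b * x ^+ l * (y - x).
  by rewrite !exprS; ring.
rewrite e.
have e2 : (y - x) * l.+1%:R * b ^+ l.+1 = b * ((y - x) * l%:R * b ^+ l) + b * b ^+ l * (y - x).
  by rewrite exprS -addn1 natrD; ring.
rewrite e2; lra.
Qed.

Lemma f_lip (x y b : R) : 0 <= x -> x <= y -> y <= b -> 0 < b ->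
  (ftilde q Rr y <= ftilde q Rr x + ((y - x) / b)%:E * gtilde q Rr b)%E.
Proof.
move=> x0 xy yb b0.
have y0 : 0 <= y by lra.
have b0' : 0 <= b by lra.
have q0 l : (1 <= l)%N -> 0 <= qt l by move=> l1; exact: ltW (@qt_pos _ q Rr qpos Rpos l l1).
rewrite /ftilde /gtilde -ser_scale; last 2 first.
- by rewrite divr_ge0 //; lra.
- by move=> l l1; rewrite mulr_ge0 ?exprn_ge0 ?(ltW b0) // mulr_ge0 // q0.
rewrite -ser_add; last 2 first.
- by move=> l l1; apply: mulr_ge0; [exact: q0 | exact: exprn_ge0].
- move=> l l1; apply: mulr_ge0; first by rewrite divr_ge0 //; lra.
  by apply: mulr_ge0; [apply: mulr_ge0 => //; exact: q0 | exact: exprn_ge0 (ltW b0)].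
apply: ser_le => l l1; apply/andP; split; first by apply: mulr_ge0; [exact: q0 | exact: exprn_ge0].
have h := @pow_lip x y b l x0 xy yb b0.
have h' : y ^+ l - x ^+ l <= (y - x) / b * (l%:R * b ^+ l).
  rewrite -(ler_pM2l b0).
  have -> : b * ((y - x) / b * (l%:R * b ^+ l)) = (y - x) * l%:R * b ^+ l.
    by field; rewrite gt_eqF.
  exact: h.
have hq := q0 l l1.
have : qt l * (y ^+ l - x ^+ l) <= qt l * ((y - x) / b * (l%:R * b ^+ l)).
  by rewrite ler_wpM2l.
have -> : (y - x) / b * (l%:R * qt l * b ^+ l) = qt l * ((y - x) / b * (l%:R * b ^+ l)) by ring.
lra.
Qed.

Lemma f_mult (a b : R) : 0 < a -> a <= b ->
  ((b / a)%:E * ftilde q Rr a <= ftilde q Rr b)%E.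
Proof.
move=> a0 ab.
have a0' : 0 <= a by lra.
have b0 : 0 <= b by lra.
have q0 l : (1 <= l)%N -> 0 <= qt l by move=> l1; exact: ltW (@qt_pos _ q Rr qpos Rpos l l1).
rewrite /ftilde -ser_scale; last 2 first.
- by rewrite divr_ge0.
- by move=> l l1; apply: mulr_ge0; [exact: q0 | exact: exprn_ge0].
apply: ser_le => l l1; apply/andP; split.
  by apply: mulr_ge0; [exact: divr_ge0 | apply: mulr_ge0; [exact: q0 | exact: exprn_ge0]].
case: l l1 => // k _.
have h : a ^+ k <= b ^+ k by rewrite lerXn2r // ?nnegrE //; lra.
rewrite !exprS.
have -> : b / a * (qt k.+1 * (a * a ^+ k)) = qt k.+1 * b * a ^+ k * (a / a) by ring.
rewrite divff ?gt_eqF // mulr1 -mulrA ler_wpM2l ?q0 //.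
rewrite ler_wpM2l //; lra.
Qed.

Lemma f0 : ftilde q Rr 0 = 0%E.
Proof. by apply: ser0 => l l1; rewrite expr0n gtn_eqF // mulr0. Qed.

End P4.

Section P5.
Context {R : realType}.

Definition clamp (a b x : R) := if x <= a then a else if b <= x then b else x.

Lemma clamp_in a b x : a <= b -> a <= clamp a b x <= b.
Proof.
rewrite /clamp => ab; case: ifP => h1; first by rewrite lexx ab.
case: ifP => h2; first by rewrite ab lexx.
move/negbT: h1; move/negbT: h2; rewrite -!ltNge => h2 h1; apply/andP; split; lra.
Qed.

Lemma clamp_id a b x : a <= x <= b -> clamp a b x = x.
Proof.
move=> /andP[ax xb]; rewrite /clamp; case: ifP => h1; first by apply/eqP; rewrite eq_le h1 ax.
by case: ifP => h2 //; apply/eqP; rewrite eq_le h2 xb.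
Qed.

Lemma clamp_le a b x y : a <= b -> clamp a b x - clamp a b y <= `|x - y|.
Proof.
move=> ab; have n1 := ler_norm (x - y); have n0 := normr_ge0 (x - y).
rewrite /clamp; case: (leP x a) => h1 /=; case: (leP y a) => h2 /=;
  case: (leP b x) => h3 /=; case: (leP b y) => h4 /=; lra.
Qed.

Lemma clamp_lip a b x y : a <= b -> `|clamp a b x - clamp a b y| <= `|x - y|.
Proof.
move=> ab; rewrite ler_norml clamp_le // andbT.
have := @clamp_le a b y x ab; rewrite distrC; lra.
Qed.

Lemma lip_cont (F : R -> R) K : 0 < K ->
  (forall x y, `|F x - F y| <= K * `|x - y|) -> continuous F.
Proof.
move=> K0 HF x; apply/cvgrPdist_lt => e e0.
have eK : 0 < e / K by exact: divr_gt0.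
apply/nbhs_ballP; exists (e / K) => // t; rewrite /ball /= => h.
apply: (le_lt_trans (HF x t)).
have -> : e = K * (e / K) by field; rewrite gt_eqF.
by rewrite ltr_pM2l.
Qed.

End P5.

Section P6.
Context {R : realType} (q : nat -> R) (Rr : R).
Hypothesis qpos : forall l, (1 <= l)%N -> 0 < q l.
Hypothesis Rpos : 0 < Rr.
Hypothesis Rlim : (fun l => q l / q l.+1) @ \oo --> Rr.
Local Notation qt := (qtilde q Rr).
Local Notation ft := (ftilde q Rr).

Lemma q0 l : (1 <= l)%N -> 0 <= qt l.
Proof. by move=> l1; exact: ltW (@qt_pos _ q Rr qpos Rpos l l1). Qed.

Lemma fterm_ge0 (x : R) l : 0 <= x -> (1 <= l)%N -> 0 <= qt l * x ^+ l.
Proof. by move=> x0 l1; rewrite mulr_ge0 ?exprn_ge0 // q0. Qed.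

Lemma gterm_ge0 (x : R) l : 0 <= x -> (1 <= l)%N -> 0 <= l%:R * qt l * x ^+ l.
Proof. by move=> x0 l1; rewrite mulr_ge0 ?exprn_ge0 // mulr_ge0 // q0. Qed.

Lemma bern (d : R) n : 0 <= d <= 1 -> 1 - n%:R * d <= (1 - d) ^+ n.
Proof.
move=> /andP[d0 d1]; elim: n => [|n ih]; first by rewrite mul0r subr0 expr0.
have h : (1 - n%:R * d) * (1 - d) <= (1 - d) ^+ n * (1 - d) by rewrite ler_wpM2r //; lra.
rewrite exprSr -addn1 natrD.
have : 0 <= n%:R * d * d by rewrite !mulr_ge0.
move: h; set A := (1 - d) ^+ n * (1 - d); nra.
Qed.

Lemma f_mono (x y : R) : 0 <= x -> x <= y -> (ft x <= ft y)%E.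
Proof.
move=> x0 xy; apply: ser_le => l l1.
rewrite fterm_ge0 //= ler_wpM2l ?q0 // lerXn2r // nnegrE; lra.
Qed.

Lemma ft_ge0 (x : R) : 0 <= x -> (0 <= ft x)%E.
Proof. by move=> x0; apply: ser_ge0 => l l1; rewrite fterm_ge0. Qed.

Lemma ft_fin (x : R) : 0 <= x < 1 -> ft x \is a fin_num.
Proof.
by move=> /andP[x0 x1]; rewrite ge0_fin_numE ?ft_ge0 // (@f_fin _ q Rr qpos Rpos Rlim) // x0.
Qed.

Lemma mu_exists : (1 < ft 1)%E \/ (ft 1 = 1%E /\ (gtilde q Rr 1 < +oo)%E) ->
  exists mu, (0 < mu <= 1) /\ ft mu = 1%E.
Proof.
case=> [h1|[h1 _]]; last by exists 1; rewrite ltr01 lexx.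
have [n hn] : exists n, 1 < \sum_(1 <= l < n) qt l.
  apply: contrapT => H.
  have : (ft 1 <= 1%:E)%E.
    apply: ser_bound => [l l1|m]; first by rewrite expr1n mulr1 q0.
    under eq_bigr do rewrite expr1n mulr1.
    by rewrite leNgt; apply/negP => hm; apply: H; exists m.
  by rewrite leNgt h1.
set S := \sum_(1 <= l < n) qt l in hn.
set k : R := n%:R.
have k0 : 0 <= k by rewrite /k.
pose D := 2 * (k + 1) * S.
have D0 : 0 < D by rewrite /D !mulr_gt0 //; lra.
pose d := (S - 1) / D.
have hdD : d * D = S - 1 by rewrite /d divfK // gt_eqF.
have d0 : 0 < d by rewrite /d divr_gt0 //; lra.
have d1 : d < 1.
  have : S - 1 < D by rewrite /D; nra.
  by rewrite -hdD -[X in _ < X]mul1r ltr_pM2r.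
have kdS : k * d * S < S - 1.
  have e : k * d * S * (2 * (k + 1)) = k * (S - 1).
    by rewrite -hdD /D; ring.
  have : k * (S - 1) < (S - 1) * (2 * (k + 1)) by nra.
  by rewrite -e ltr_pM2r //; lra.
pose b := 1 - d.
have b0 : 0 < b by rewrite /b; lra.
have b1 : b < 1 by rewrite /b; lra.
have hb : (1%:E < ft b)%E.
  have p1 : (1 - k * d) * S <= b ^+ n * S.
    by rewrite ler_wpM2r ?(ltW (lt_trans ltr01 hn)) // bern // (ltW d0) ltW.
  have p2 : b ^+ n * S <= \sum_(1 <= l < n) qt l * b ^+ l.
    rewrite /S mulr_sumr big_nat_cond [X in _ <= X]big_nat_cond.
    apply: ler_sum => l /andP[/andP[l1 ln] _].
    rewrite mulrC ler_wpM2l ?q0 //.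
    rewrite -(subnKC (ltnW ln)) exprD ler_piMr ?exprn_ge0 ?(ltW b0) //.
    by rewrite exprn_ile1 // ltW.
  have p3 := @ser_ge_partial R (fun l => qt l * b ^+ l) n
    (fun l l1 => mulr_ge0 (q0 l l1) (exprn_ge0 _ (ltW b0))).
  apply: (lt_le_trans _ p3); rewrite lte_fin.
  have : 1 < (1 - k * d) * S by nra.
  lra.
have gfin : gtilde q Rr b \is a fin_num.
  rewrite ge0_fin_numE ?(@g_fin _ q Rr qpos Rpos Rlim) ?(ltW b0) //.
  by apply: ser_ge0 => l l1; rewrite gterm_ge0 // ltW.
set G := fine (gtilde q Rr b).
have G0 : 0 <= G.
  rewrite /G fine_ge0 //; apply: ser_ge0 => l l1.
  by rewrite gterm_ge0 // ltW.
have gE : gtilde q Rr b = G%:E by rewrite /G fineK.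
pose a := b / (2 * (G + 1)).
have a0 : 0 < a by rewrite /a divr_gt0 // mulr_gt0 //; lra.
have ab : a < b.
  rewrite /a ltr_pdivrMr ?mulr_gt0 //; [nra | lra].
have fE x : 0 <= x <= b -> ft x = (fine (ft x))%:E.
  move=> /andP[x0 xb]; rewrite fineK // ft_fin // x0 /=; lra.
have ha : (ft a < 1%:E)%E.
  have := @f_lip R q Rr qpos Rpos 0 a b (lexx 0) (ltW a0) (ltW ab) b0.
  rewrite f0 add0e subr0 gE -EFinM => h; apply: (le_lt_trans h); rewrite lte_fin.
  rewrite /a.
  have -> : b / (2 * (G + 1)) / b * G = G / (2 * (G + 1)).
    by field; rewrite ?gt_eqF //; lra.
  rewrite ltr_pdivrMr; lra.
have lipF u v : 0 <= u <= b -> 0 <= v <= b ->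
    `|fine (ft u) - fine (ft v)| <= G / b * `|u - v|.
  wlog : u v / u <= v.
    move=> W hu hv; case: (leP u v) => uv; first exact: W.
    by rewrite distrC [`|u - v|]distrC; apply: W => //; exact: ltW.
  move=> uv /andP[u0 ub] /andP[v0 vb].
  have h := @f_lip R q Rr qpos Rpos u v b u0 uv vb b0.
  have hm := f_mono _ _ u0 uv.
  rewrite (fE u) ?u0 // (fE v) ?v0 // gE -EFinM -EFinD !lee_fin in h hm.
  have e1 : `|u - v| = v - u by rewrite distrC ger0_norm //; lra.
  have e2 : `|fine (ft u) - fine (ft v)| = fine (ft v) - fine (ft u).
    by rewrite distrC ger0_norm //; lra.
  rewrite e1 e2.
  have -> : G / b * (v - u) = (v - u) / b * G by rewrite mulrC mulrA mulrAC.
  lra.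
pose F := fun x => fine (ft (clamp a b x)).
have Fc : continuous F.
  apply: (@lip_cont R F (G / b + 1)).
    by rewrite ltr_pwDr // divr_ge0 // ltW.
  move=> x y; rewrite /F.
  have cx := @clamp_in R a b x (ltW ab); have cy := @clamp_in R a b y (ltW ab).
  apply: (le_trans (lipF _ _ _ _)).
  - by move: cx => /andP[g1 g2]; rewrite g2 andbT; lra.
  - by move: cy => /andP[g1 g2]; rewrite g2 andbT; lra.
  have cl := @clamp_lip R a b x y (ltW ab).
  have : G / b * `|clamp a b x - clamp a b y| <= G / b * `|x - y|.
    by rewrite ler_wpM2l // divr_ge0 // ltW.
  have : 0 <= `|x - y| by [].
  lra.
have Fa : F a = fine (ft a) by rewrite /F clamp_id // lexx ltW.
have Fb : F b = fine (ft b) by rewrite /F clamp_id // lexx andbT ltW.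
have [c cab Fc1] : exists2 c, c \in `[a, b] & F c = 1.
  apply: IVT; first exact: ltW.
    exact: continuous_subspaceT.
  rewrite Fa Fb.
  move: ha hb; rewrite (fE a) ?(ltW a0) ?(ltW ab) // (fE b) ?(ltW b0) ?lexx // !lte_fin.
  move=> ha hb; rewrite ge_min le_max; apply/andP; split; apply/orP; [left|right]; lra.
move: cab; rewrite in_itv /= => /andP[ac cb].
exists c; split; first by rewrite (lt_le_trans a0 ac) /=; lra.
move: Fc1; rewrite /F clamp_id ?ac ?cb // => Fc1.
by rewrite (fE c) ?cb ?andbT ?Fc1 //; lra.
Qed.

End P6.

Section P7.
Context {R : realType} (q : nat -> R) (Rr : R).
Hypothesis qpos : forall l, (1 <= l)%N -> 0 < q l.
Hypothesis Rpos : 0 < Rr.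
Hypothesis Rlim : (fun l => q l / q l.+1) @ \oo --> Rr.
Local Notation qt := (qtilde q Rr).
Local Notation ft := (ftilde q Rr).
Local Notation q0 := (@q0 R q Rr qpos Rpos).

Lemma mu_unique (a b : R) : 0 < a <= 1 -> ft a = 1%E -> 0 < b <= 1 -> ft b = 1%E -> a = b.
Proof.
wlog : a b / a <= b.
  move=> W ha fa hb fb; case: (leP a b) => ab; first exact: W.
  by apply/esym/W => //; exact: ltW.
move=> ab /andP[a0 _] fa /andP[b0 _] fb.
have := @f_mult R q Rr qpos Rpos a b a0 ab.
rewrite fa fb mule1 lee_fin ler_pdivrMr // mul1r => ba.
by apply/eqP; rewrite eq_le ab ba.
Qed.

Lemma ser_sum_le (u : nat -> R) (s : R) n : (forall l, (1 <= l)%N -> 0 <= u l) ->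
  (\sum_(1 <= l <oo) (u l)%:E)%E = s%:E -> \sum_(1 <= l < n) u l <= s.
Proof. by move=> u0 us; have := @ser_ge_partial R u n u0; rewrite us lee_fin. Qed.

Lemma Amin (mu rs : R) (z : nat -> R) : 0 < mu <= 1 -> ft mu = 1%E -> 0 < rs ->
  X0plus z -> rho z = rs%:E -> rs * ln mu <= Atilde q Rr z.
Proof.
move=> /andP[mu0 mu1] fmu rs0 [z0 _] rz.
have nz : ~ (forall l, (1 <= l)%N -> z l = 0).
  move=> h; move: rz; rewrite /rho ser0; last by move=> l l1; rewrite h // mulr0.
  by move=> [] /eqP; rewrite eq_sym gt_eqF.
rewrite /Atilde asboolF //.
have lz0 l : (1 <= l)%N -> 0 <= l%:R * z l by move=> l1; rewrite mulr_ge0 ?z0.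
have Nle : (Ntot z <= rho z)%E.
  apply: ser_le => l l1; rewrite z0 //=.
  by rewrite -[X in X <= _]mul1r ler_wpM2r ?z0 // ler1n.
have N0 : (0 <= Ntot z)%E by apply: ser_ge0.
have Nfin : Ntot z \is a fin_num by rewrite ge0_fin_numE // (le_lt_trans Nle) // rz ltey.
set N := fine (Ntot z).
have NE : Ntot z = N%:E by rewrite /N fineK.
have [j [j1 zj]] : exists j, (1 <= j)%N /\ z j <> 0.
  apply: contrapT => H; apply: nz => l l1; apply: contrapT => zl; apply: H; by exists l.
have zleN l : (1 <= l)%N -> z l <= N.
  move=> l1; have := @ser_ge_partial R z l.+1 z0; rewrite -/(Ntot z) NE lee_fin.
  apply: le_trans; apply: term_le_sum; last by rewrite l1 ltnSn.
  by move=> k /andP[k1 _]; exact: z0.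
have zjp : 0 < z j by rewrite lt_neqAle eq_sym; apply/andP; split; [exact/eqP | exact: z0].
have Npos : 0 < N by apply: (lt_le_trans zjp); exact: zleN.
have [c [c0 hc]] := @qt_lower R q Rr qpos Rpos Rlim.
have ln2 : 0 <= ln (2 : R) by apply: ln_ge0; rewrite ler1n.
have lnmu : ln mu <= 0 by exact: ln_le0.
pose a l := Aterm q Rr N z l.
pose cc l := l%:R * z l * ln mu + z l - N * (qt l * mu ^+ l).
have lower l : (1 <= l)%N -> cc l <= a l.
  move=> l1; rewrite /a /cc /Aterm.
  have qp := @qt_pos R q Rr qpos Rpos l l1.
  have mp : 0 < mu ^+ l by rewrite exprn_gt0.
  have pp : 0 < N * (qt l * mu ^+ l) by rewrite mulr_gt0 // mulr_gt0.
  case: eqP => [zl0|zl]; first by rewrite zl0 mulr0 mul0r /=; lra.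
  have zp : 0 < z l by rewrite lt_neqAle eq_sym; apply/andP; split; [exact/eqP | exact: z0].
  set p := N * (qt l * mu ^+ l) in pp *.
  have e : z l / (qt l * N) = (z l / p) * mu ^+ l by rewrite /p; field; rewrite !gt_eqF.
  have zpp : 0 < z l / p by exact: divr_gt0.
  rewrite e lnM ?posrE // lnXn // -mulr_natl.
  have hln : ln (p / z l) <= p / z l - 1.
    have e0 : 1 + (p / z l - 1) = p / z l by ring.
    have := @le_ln1Dx R (p / z l - 1); rewrite e0; apply.
    have : 0 < p / z l by exact: divr_gt0.
    lra.
  have e2 : ln (p / z l) = - ln (z l / p) by rewrite -invf_div lnV ?posrE.
  rewrite e2 in hln.
  have e3 : z l * (p / z l) = p by field; rewrite gt_eqF.
  have : z l * (1 - p / z l) <= z l * ln (z l / p) by rewrite ler_wpM2l ?(ltW zp) //; lra.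
  rewrite mulrBr mulr1 e3 mulrDr.
  move=> h; rewrite -[ln mu *+ l]mulr_natl.
  have -> : z l * (l%:R * ln mu) = l%:R * z l * ln mu by ring.
  lra.
have upper l : (1 <= l)%N -> a l <= (- ln c) * z l + ln 2 * (l%:R * z l).
  move=> l1; rewrite /a /Aterm.
  case: eqP => [->|zl]; first by rewrite !mulr0 addr0.
  have zp : 0 < z l by rewrite lt_neqAle eq_sym; apply/andP; split; [exact/eqP | exact: z0].
  have qp := @qt_pos R q Rr qpos Rpos l l1.
  have tp : 0 < (2 : R) ^+ l by rewrite exprn_gt0.
  have hq : c <= qt l * 2 ^+ l by rewrite -ler_pdivrMr // hc.
  have qN : 0 < qt l * N by rewrite mulr_gt0.
  have h1 : z l / (qt l * N) <= 2 ^+ l / c.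
    rewrite ler_pdivrMr //.
    have -> : 2 ^+ l / c * (qt l * N) = (qt l * 2 ^+ l / c) * N by ring.
    have : 1 <= qt l * 2 ^+ l / c by rewrite ler_pdivlMr // mul1r.
    have := zleN l l1; nra.
  have h2 : ln (z l / (qt l * N)) <= ln (2 ^+ l / c).
    by rewrite ler_ln ?posrE ?divr_gt0.
  rewrite [ln (2 ^+ l / c)]ln_div ?posrE // lnXn // in h2.
  have -> : - ln c * z l + ln 2 * (l%:R * z l) = z l * (ln 2 *+ l - ln c).
    by rewrite -[ln 2 *+ l]mulr_natl; ring.
  by rewrite ler_wpM2l // ltW.
pose P1 n := \sum_(1 <= l < n) l%:R * z l.
pose P2 n := \sum_(1 <= l < n) z l.
pose P3 n := \sum_(1 <= l < n) qt l * mu ^+ l.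
have cP1 : P1 @ \oo --> rs by apply: ser_cvg => //; exact: rz.
have cP2 : P2 @ \oo --> N by apply: ser_cvg => //; exact: NE.
have f0' l : (1 <= l)%N -> 0 <= qt l * mu ^+ l by move=> l1; rewrite mulr_ge0 ?q0 ?exprn_ge0 // ltW.
have cP3 : P3 @ \oo --> (1 : R) by apply: ser_cvg => //; exact: fmu.
have P1le n : P1 n <= rs by apply: ser_sum_le => //; exact: rz.
have P2le n : P2 n <= N by apply: ser_sum_le => //; exact: NE.
have P3le n : P3 n <= (1 : R) by apply: ser_sum_le => //; exact: fmu.
have P2ge n : 0 <= P2 n by apply: sum_ge0_nat => k k1; exact: z0.
have P3ge n : 0 <= P3 n by apply: sum_ge0_nat => k k1; exact: f0'.
have Ceq n : \sum_(1 <= l < n) cc l = ln mu * P1 n + P2 n - N * P3 n.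
  rewrite /cc /P1 /P2 /P3 !mulr_sumr -big_split -sumrB /=; apply: eq_bigr => l _; ring.
pose B n := \sum_(1 <= l < n) (a l - cc l).
have Beq n : \sum_(1 <= l < n) a l = B n + \sum_(1 <= l < n) cc l.
  by rewrite /B -big_split /=; apply: eq_bigr => l _; rewrite subrK.
have Bge n : 0 <= B n by apply: sum_ge0_nat => k k1; rewrite subr_ge0 lower.
have Bnd : nondecreasing_seq B.
  apply/nondecreasing_seqP => n; rewrite /B.
  case: n => [|n]; first by rewrite !big_geq.
  by rewrite [X in _ <= X](@big_nat_recr _ _ _ n.+1) //= lerDl subr_ge0 lower.
have Bub n : B n <= `|ln c| * N + ln 2 * rs - ln mu * rs + N.
  have S1 : \sum_(1 <= l < n) a l <= - ln c * P2 n + ln 2 * P1 n.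
    rewrite /P1 /P2 mulr_sumr mulr_sumr -big_split /= big_nat_cond [X in _ <= X]big_nat_cond.
    by apply: ler_sum => l /andP[/andP[l1 _] _]; apply: upper.
  have S2 : - ln c * P2 n <= `|ln c| * N.
    apply: (le_trans (y := `|ln c| * P2 n)); first by rewrite ler_wpM2r // -normrN ler_norm.
    by rewrite ler_wpM2l.
  have S3 : ln 2 * P1 n <= ln 2 * rs by rewrite ler_wpM2l.
  have S4 : ln mu * rs <= ln mu * P1 n by rewrite ler_wnM2l.
  have S5 : N * P3 n <= N by rewrite -[X in _ <= X]mulr1 ler_wpM2l // ltW.
  have := P2ge n; have := Beq n; rewrite Ceq; lra.
have cB : B @ \oo --> limn B.
  by apply: cvgP; apply: nondecreasing_cvgn => //; exists (`|ln c| * N + ln 2 * rs - ln mu * rs + N) => _ [n _ <-].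
have Blim : 0 <= limn B by apply: limr_ge; [exact: cvgP cB | exact: nearW].
have cS : (fun n => \sum_(1 <= l < n) a l) @ \oo --> limn B + (ln mu * rs + N - N * 1).
  have -> : (fun n => \sum_(1 <= l < n) a l) = (fun n => B n + (ln mu * P1 n + P2 n - N * P3 n)).
    by apply: funext => n; rewrite Beq Ceq.
  apply: cvgD => //; apply: cvgB; first apply: cvgD => //; apply: cvgMr => //.
rewrite /a in cS; rewrite (cvg_lim _ cS) //.
lra.
Qed.

End P7.

Section P8.
Context {R : realType} (q : nat -> R) (Rr : R).
Hypothesis qpos : forall l, (1 <= l)%N -> 0 < q l.
Hypothesis Rpos : 0 < Rr.
Local Notation qt := (qtilde q Rr).
Local Notation ft := (ftilde q Rr).

Lemma Astar (mu rs : R) : 0 < mu <= 1 -> ft mu = 1%E -> 0 < rs ->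
  (gtilde q Rr mu < +oo)%E ->
  let zs := fun l => rs / fine (gtilde q Rr mu) * qt l * mu ^+ l in
  rho zs = rs%:E /\ X0plus zs /\ Atilde q Rr zs = rs * ln mu.
Proof.
move=> /andP[mu0 mu1] fmu rs0 gfin zs.
have qp l : (1 <= l)%N -> 0 < qt l by exact: (@qt_pos R q Rr qpos Rpos l).
have gt0 l : (1 <= l)%N -> 0 <= l%:R * qt l * mu ^+ l.
  by move=> l1; rewrite mulr_ge0 ?exprn_ge0 ?(ltW mu0) // mulr_ge0 // ltW ?qp.
have g1 : ((1%:R * qt 1 * mu ^+ 1)%:E <= gtilde q Rr mu)%E.
  by have := @ser_ge_partial R (fun l => l%:R * qt l * mu ^+ l) 2 gt0; rewrite big_nat1.
have gf : gtilde q Rr mu \is a fin_num.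
  by rewrite ge0_fin_numE // (le_trans _ g1) // lee_fin gt0.
set G := fine (gtilde q Rr mu) in zs *.
have gE : gtilde q Rr mu = G%:E by rewrite /G fineK.
have G0 : 0 < G.
  rewrite -lte_fin -gE; apply: lt_le_trans g1; rewrite lte_fin expr1 mul1r mulr_gt0 //.
  exact: qp.
set Ns := rs / G in zs *.
have Ns0 : 0 < Ns by exact: divr_gt0.
have zsp l : (1 <= l)%N -> 0 < zs l.
  by move=> l1; rewrite /zs mulr_gt0 ?exprn_gt0 // mulr_gt0 // qp.
have rhoE : rho zs = rs%:E.
  rewrite /rho (@eq_eseriesr R _ (fun l => (Ns * (l%:R * qt l * mu ^+ l))%:E)); last first.
    by move=> l _; rewrite /zs; congr (_%:E); ring.
  rewrite ser_scale ?(ltW Ns0) // -/(gtilde q Rr mu) gE -EFinM /Ns divfK //.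
  by rewrite gt_eqF.
split => //; split.
  split; first by move=> l l1; exact/ltW/zsp.
  by rewrite rhoE ltey.
have NE : Ntot zs = Ns%:E.
  rewrite /Ntot (@eq_eseriesr R _ (fun l => (Ns * (qt l * mu ^+ l))%:E)); last first.
    by move=> l _; rewrite /zs mulrA.
  rewrite ser_scale ?(ltW Ns0) //; last first.
    by move=> l l1; rewrite mulr_ge0 ?exprn_ge0 ?(ltW mu0) // ltW ?qp.
  have -> : (\sum_(1 <= l <oo) (qt l * mu ^+ l)%:E)%E = ft mu by [].
  by rewrite fmu mule1.
rewrite /Atilde asboolF; last first.
  by move=> h; have := zsp 1%N isT; rewrite h // ltxx.
rewrite NE /=.
have eA n : \sum_(1 <= l < n) Aterm q Rr Ns zs l = ln mu * \sum_(1 <= l < n) l%:R * zs l.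
  rewrite mulr_sumr; apply: eq_big_nat => l /andP[l1 _].
  rewrite /Aterm gt_eqF ?zsp //.
  have -> : zs l / (qt l * Ns) = mu ^+ l.
    by rewrite /zs; field; rewrite !gt_eqF ?qp.
  by rewrite lnXn // -[ln mu *+ l]mulr_natl; ring.
under eq_fun do rewrite eA.
have c1 : (fun n => \sum_(1 <= l < n) l%:R * zs l) @ \oo --> rs.
  by apply: ser_cvg => // l l1; rewrite mulr_ge0 // ltW ?zsp.
have c2 : (fun n => ln mu * \sum_(1 <= l < n) l%:R * zs l) @ \oo --> ln mu * rs.
  exact: cvgMr.
rewrite (cvg_lim _ c2) //; ring.
Qed.

End P8.

Theorem theorem8 (R : realType) (q : nat -> R) (Rr : R) (rhostar : R)
  (qpos : forall l, (1 <= l)%N -> 0 < q l)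
  (q1 : q 1%N = 1)
  (Rpos : 0 < Rr)
  (Rlim : (fun l => q l / q l.+1) @ \oo --> Rr)
  (EQ : (1 < ftilde q Rr 1)%E \/
        (ftilde q Rr 1 = 1%E /\ (gtilde q Rr 1 < +oo)%E))
  (rhopos : 0 < rhostar) :
  (exists! mu : R, (0 < mu <= 1) /\ ftilde q Rr mu = 1%E) /\
  forall mu : R, 0 < mu <= 1 -> ftilde q Rr mu = 1%E ->
    let Nstar := rhostar / fine (gtilde q Rr mu) in
    let zstar := fun l : nat => Nstar * qtilde q Rr l * mu ^+ l in
    (gtilde q Rr mu < +oo)%E /\
    X0plus zstar /\ rho zstar = rhostar%:E /\
    (forall z : nat -> R, X0plus z -> rho z = rhostar%:E ->
       Atilde q Rr zstar <= Atilde q Rr z).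
Proof.
split.
  have [mu [hmu fmu]] := @mu_exists R q Rr qpos Rpos Rlim EQ.
  exists mu; split => // mu' [hmu' fmu'].
  exact: (@mu_unique R q Rr qpos Rpos mu mu' hmu fmu hmu' fmu').
move=> mu hmu fmu Nstar zstar.
have gfin : (gtilde q Rr mu < +oo)%E.
  move: (hmu) => /andP[mu0 mu1]; case: (ltP mu 1) => m1.
    by apply: (@g_fin R q Rr qpos Rpos Rlim mu); rewrite m1 ltW.
  have e : mu = 1 by apply/eqP; rewrite eq_le mu1 m1.
  subst mu; case: EQ => [h|[_ h]] //.
  by rewrite fmu ltxx in h.
have [rE [X A]] := @Astar R q Rr qpos Rpos mu rhostar hmu fmu rhopos gfin.
split => //; split => //; split => //.
move=> z Xz rz.
have A' : Atilde q Rr zstar = rhostar * ln mu := A.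
rewrite A'.
exact: (@Amin R q Rr qpos Rpos Rlim mu rhostar z hmu fmu rhopos Xz rz).
Qed.
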